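(* Let $F$ be a positive integer that is not a multiple of $3$. The number of maximal embedding dimension numerical semigroups with multiplicity $3$ and Frobenius number $F$ is $\left\lfloor\frac{F+1}{3}\right\rfloor - \left\lceil \frac{F+2}{6}\right\rceil + 1$.
   Context: A numerical semigroup is a subset $S \subseteq \mathbb{N}$ containing $0$, closed under addition, with $\mathbb{N}\setminus S$ finite. Its multiplicity is $\min(S\setminus\{0\})$, its Frobenius number is the largest integer not in $S$, and its embedding dimension is the cardinality of its unique minimal system of generators. $S$ is of maximal embedding dimension if its embedding dimension equals its multiplicity. *)

(* Defs.v *)
From mathcomp Require Import all_boot all_order all_algebra.
Set Implicit Arguments. Unset Strict Implicit. Unset Printing Implicit Defensive.

Definition numerical_semigroup (S : pred nat) : Prop :=
  [/\ S 0,
      (forall a b, S a -> S b -> S (a + b)) &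
      exists N, forall n, N <= n -> S n].

Definition is_multiplicity (S : pred nat) (m : nat) : Prop :=
  [/\ 0 < m, S m & forall k, 0 < k < m -> ~~ S k].

Definition is_frobenius (S : pred nat) (F : nat) : Prop :=
  ~~ S F /\ forall n, F < n -> S n.

Definition in_monoid_gen (G : seq nat) (n : nat) : Prop :=
  exists c : seq nat, size c = size G /\
    n = \sum_(i < size G) nth 0 c i * nth 0 G i.

Definition generates (G : seq nat) (S : pred nat) : Prop :=
  forall n, S n <-> in_monoid_gen G n.

Definition minimal_generating_system (G : seq nat) (S : pred nat) : Prop :=
  [/\ uniq G, generates G S &
      forall G' : seq nat, {subset G' <= G} -> generates G' S -> {subset G <= G'}].

Definition is_embedding_dimension (S : pred nat) (e : nat) : Prop :=
  exists G, minimal_generating_system G S /\ size G = e.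

Definition MED_with_multiplicity (S : pred nat) (m : nat) : Prop :=
  is_multiplicity S m /\ is_embedding_dimension S m.

(* Encoding: a subset A of {0,..,F} determines the subset of N that agrees
   with A on {0,..,F} and contains every n > F.  Every numerical semigroup
   with Frobenius number F is of this form (extensionally), and distinct A
   give distinct subsets of N. *)
Definition lift_set (F : nat) (A : {set 'I_F.+1}) : pred nat :=
  fun n => if n <= F then (inord n : 'I_F.+1) \in A else true.

(* Main.v *)
Require Import Defs.
From mathcomp Require Import all_boot all_order all_algebra zify.
Set Implicit Arguments. Unset Strict Implicit. Unset Printing Implicit Defensive.
Import GRing.Theory Num.Theory.

Section Gen.
Variable S : pred nat.
Hypothesis S0 : S 0.
Hypothesis Sadd : forall a b, S a -> S b -> S (a + b).

Lemma Smul k x : S x -> S (k * x).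
Proof. move=> hx; elim: k => [|k IH]; first by rewrite mul0n. by rewrite mulSn Sadd. Qed.

Lemma Ssum n (f : nat -> nat) : (forall i, i < n -> S (f i)) -> S (\sum_(i < n) f i).
Proof.
elim: n => [|n IH] h; first by rewrite big_ord0.
rewrite big_ord_recr /= Sadd //; first by apply: IH => i hi; apply: h; lia.
by apply: h.
Qed.

Definition atom x := [/\ S x, 0 < x & forall a b, S a -> S b -> 0 < a -> 0 < b -> a + b <> x].

Lemma atom_sum x n (f : nat -> nat) : atom x -> (forall i, i < n -> S (f i)) ->
  \sum_(i < n) f i = x -> exists2 i, i < n & f i = x.
Proof.
case=> _ x0 hx; elim: n => [|n IH] h; first by rewrite big_ord0 => E; lia.
rewrite big_ord_recr /= => E.
have hs : S (\sum_(i < n) f i) by apply: Ssum => i hi; apply: h; lia.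
case: (posnP (f n)) => fn0.
  have h' : forall i, i < n -> S (f i) by move=> i hi; apply: h; lia.
  have E' : \sum_(i < n) f i = x by rewrite -E fn0 addn0.
  have [i hi fi] := IH h' E'.
  by exists i => //; lia.
case: (posnP (\sum_(i < n) f i)) => s0.
  by exists n => //; rewrite -E s0.
by exfalso; apply: (hx _ _ hs (h n (ltnSn n)) s0 fn0).
Qed.

Lemma gen_mem G i : generates G S -> i < size G -> S (nth 0 G i).
Proof.
move=> hg hi; apply/hg; exists (mkseq (fun j => (j == i) : nat) (size G)); split.
  by rewrite size_mkseq.
rewrite (bigD1 (Ordinal hi)) //= big1 ?addn0.
  by rewrite nth_mkseq // eqxx mul1n.
move=> j hj; rewrite nth_mkseq //. have -> : (nat_of_ord j == i) = false.
  by apply/negbTE; apply: contra hj => /eqP e; apply/eqP; apply: val_inj.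
by rewrite mul0n.
Qed.

Lemma atom_in G x : generates G S -> atom x -> x \in G.
Proof.
move=> hg ha; have [hx x0 hxa] := ha.
case: (hg x) => /(_ hx) [c [hc E]] _.
have hS : forall i, i < size G -> S (nth 0 c i * nth 0 G i).
  by move=> i hi; apply: Smul; apply: gen_mem.
have [i hi fi] := atom_sum (f := fun i => nth 0 c i * nth 0 G i) ha hS (esym E).
have gS := gen_mem hg hi.
case: (ltnP 1 (nth 0 c i)) => hci.
  exfalso; apply: (hxa (nth 0 G i) ((nth 0 c i).-1 * nth 0 G i)) => //.
  - exact: Smul.
  - by case: (posnP (nth 0 G i)) => // e; move: fi; rewrite e muln0; lia.
  - rewrite muln_gt0; apply/andP; split; first by lia.
    by case: (posnP (nth 0 G i)) => // e; move: fi; rewrite e muln0; lia.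
  - rewrite -fi; set g := nth 0 G i; set k := nth 0 c i; move: hci; clear; nia.
have ci1 : nth 0 c i = 1.
  by case: (posnP (nth 0 c i)) => e; [move: fi; rewrite e mul0n; lia | lia].
by move: fi; rewrite ci1 mul1n => <-; apply: mem_nth.
Qed.
End Gen.
Lemma gen3 a b c n : in_monoid_gen [:: a; b; c] n <-> exists x y z, n = x*a + y*b + z*c.
Proof.
split.
- case=> cs [Hs ->]; case: cs Hs => [|x [|y [|z [|? ?]]]] //= _.
  exists x, y, z; rewrite !big_ord_recl big_ord0 /=; lia.
- case=> x [y [z ->]]; exists [:: x; y; z]; split => //.
  rewrite /= !big_ord_recl big_ord0 /=; lia.
Qed.
Lemma gen2 a b n : in_monoid_gen [:: a; b] n <-> exists x y, n = x*a + y*b.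
Proof.
split.
- case=> cs [Hs ->]; case: cs Hs => [|x [|y [|? ?]]] //= _.
  exists x, y; rewrite !big_ord_recl big_ord0 /=; lia.
- case=> x [y ->]; exists [:: x; y]; split => //.
  rewrite /= !big_ord_recl big_ord0 /=; lia.
Qed.
Definition T (w1 w2 : nat) : pred nat := fun n =>
  (n %% 3 == 0) || ((n %% 3 == 1) && (w1 <= n)) || ((n %% 3 == 2) && (w2 <= n)).
Lemma TP w1 w2 n : reflect ((n%%3 = 0) \/ (n%%3 = 1 /\ w1 <= n) \/ (n%%3 = 2 /\ w2 <= n)) (T w1 w2 n).
Proof.
apply: (iffP idP).
- case/orP => [/orP [/eqP H | /andP [/eqP H1 H2]] | /andP [/eqP H1 H2]]; auto.
- move=> [H|[[H1 H2]|[H1 H2]]]; rewrite /T ?H ?H1 ?H2 ?orbT //.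
Qed.
Lemma Tadd w1 w2 a b : w2 <= 2*w1 -> w1 <= 2*w2 -> T w1 w2 a -> T w1 w2 b -> T w1 w2 (a+b).
Proof. move=> h1 h2 /TP ha /TP hb; apply/TP; lia. Qed.

Definition props F (S : pred nat) :=
  numerical_semigroup S /\ MED_with_multiplicity S 3 /\ is_frobenius S F.

Lemma gen_ext S1 S2 G : S1 =1 S2 -> generates G S1 -> generates G S2.
Proof. by move=> E h n; rewrite -E. Qed.

Lemma props_ext F S1 S2 : S1 =1 S2 -> props F S1 -> props F S2.
Proof.
move=> E [[h0 hadd [N hN]] [[[m0 m3 mk] [G [[hu hg hmin] hs]]] [fF fn]]].
split; [|split; [split; [split|] | split]].
- split; first by rewrite -E.
  + by move=> a b; rewrite -!E; apply: hadd.
  + by exists N => n hn; rewrite -E; apply: hN.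
- done.
- by rewrite -E.
- by move=> k hk; rewrite -E; apply: mk.
- exists G; split=> //; split=> //; first exact: gen_ext hg.
  move=> G' hs' hg'; apply: hmin => //; apply: gen_ext hg' => n; by rewrite E.
- by rewrite -E.
- by move=> n hn; rewrite -E; apply: fn.
Qed.

Definition valid F w1 w2 := w1 %% 3 = 1 /\ w2 %% 3 = 2 /\ 3 < w1 /\ 3 < w2 /\
  w2 < 2 * w1 /\ w1 < 2 * w2 /\ maxn w1 w2 = F + 3.

Lemma T_gen w1 w2 : 3 < w1 -> 3 < w2 -> w1 %% 3 = 1 -> w2 %% 3 = 2 ->
  w2 <= 2 * w1 -> w1 <= 2 * w2 -> generates [:: 3; w1; w2] (T w1 w2).
Proof.
move=> a1 a2 r1 r2 b1 b2 n; rewrite gen3; split.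
- move/TP => [h|[[h h']|[h h']]].
  + by exists (n %/ 3), 0, 0; lia.
  + by exists ((n - w1) %/ 3), 1, 0; lia.
  + by exists ((n - w2) %/ 3), 0, 1; lia.
- have T0 : T w1 w2 0 by apply/TP; lia.
  have Ta := @Tadd w1 w2 _ _ b1 b2.
  move=> [x [y [z ->]]]; rewrite !Ta //; apply: Smul => //; apply/TP; lia.
Qed.

Lemma T_props F w1 w2 : valid F w1 w2 -> props F (T w1 w2).
Proof.
move=> [r1 [r2 [a1 [a2 [b1 [b2 mx]]]]]].
have T0 : T w1 w2 0 by apply/TP; lia.
have Ta : forall a b, T w1 w2 a -> T w1 w2 b -> T w1 w2 (a + b).
  by move=> a b; apply: Tadd; lia.
split; [split|split; [split|]].
- done.
- done.
- by exists (F + 1) => n hn; apply/TP; lia.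
- by split => // k hk; apply/negP => /TP; lia.
- exists [:: 3; w1; w2]; split => //; split.
  + rewrite /= !inE; apply/andP; split; [apply/negP => /orP[] /eqP| apply/negP => /eqP]; lia.
  + by apply: T_gen; lia.
  + move=> G' _ hg x; rewrite !inE => /orP[/eqP->|/orP[/eqP->|/eqP->]];
      apply: (atom_in T0 Ta hg); split; try (apply/TP; lia); try lia;
      move=> a b /TP ha /TP hb; lia.
- by split; [apply/negP => /TP; lia | move=> n hn; apply/TP; lia].
Qed.

Lemma small_ed (S : pred nat) g : S 0 -> (forall a b, S a -> S b -> S (a + b)) ->
  atom S 3 -> atom S g -> 3 != g -> generates [:: 3; g] S -> is_embedding_dimension S 3 -> False.
Proof.
move=> S0 Sa a3 ag ne hg [G [[hu hG hmin] hs]].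
have h3 := atom_in S0 Sa hG a3; have hg' := atom_in S0 Sa hG ag.
have sub : {subset [:: 3; g] <= G} by move=> x; rewrite !inE => /orP[/eqP->|/eqP->].
have := uniq_leq_size hu (hmin _ sub hg); rewrite hs /=; done.
Qed.

Lemma arith1 F w1 w2 : F %% 3 = 1 -> w1 %% 3 = 1 -> F < w1 -> w1 <= F + 3 -> w2 <= F + 1 ->
  maxn w1 w2 = F + 3.
Proof. lia. Qed.
Lemma arith2 F w1 w2 : F %% 3 = 2 -> w2 %% 3 = 2 -> F < w2 -> w2 <= F + 3 -> w1 <= F + 2 ->
  maxn w1 w2 = F + 3.
Proof. lia. Qed.
Lemma modsplit n w : n %% 3 = w %% 3 -> w <= n -> n = (n - w) %/ 3 * 3 + w.
Proof.
move=> h hw; have : 3 %| n - w by rewrite -eqn_mod_dvd // h.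
by move/divnK => ->; rewrite subnK.
Qed.

Lemma props_char F (S : pred nat) : 0 < F -> ~~ (3 %| F) -> props F S -> exists w1 w2, valid F w1 w2 /\ S =1 T w1 w2.
Proof.
move=> F0 F3 [[S0 Sa [N hN]] [[[_ S3 m12] ed] [nF fF]]].
have F3' : F %% 3 <> 0 by move=> h; move: F3; rewrite /dvdn h.
have ex1 : exists n, (n %% 3 == 1) && S n.
  exists (F * 3 + 1); rewrite fF ?andbT; first by rewrite modnMDl.
  by clear; lia.
have ex2 : exists n, (n %% 3 == 2) && S n.
  exists (F * 3 + 2); rewrite fF ?andbT; first by rewrite modnMDl.
  by clear; lia.
case: (ex_minnP ex1) => w1 /andP[/eqP r1 Sw1] min1.
case: (ex_minnP ex2) => w2 /andP[/eqP r2 Sw2] min2.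
have S3k : forall k, S (k * 3) by move=> k; apply: Smul.
have E : S =1 T w1 w2.
  move=> n; apply/idP/TP.
  - move=> Sn; have : n %% 3 < 3 by apply: ltn_pmod.
    case: (n %% 3 =P 0) => h0; first by left.
    case: (n %% 3 =P 1) => h1.
      by right; left; split => //; apply: min1; rewrite Sn andbT; apply/eqP.
    case: (n %% 3 =P 2) => h2; last by clear -h0 h1 h2; lia.
    by right; right; split => //; apply: min2; rewrite Sn andbT; apply/eqP.
  - move=> [h|[[h h']|[h h']]].
    + by have -> : n = n %/ 3 * 3 by rewrite divnK // /dvdn h.
    + by rewrite (modsplit (_ : n %% 3 = w1 %% 3) h'); [apply: Sa | rewrite h r1].
    + by rewrite (modsplit (_ : n %% 3 = w2 %% 3) h'); [apply: Sa | rewrite h r2].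
have w1n1 : w1 != 1 by apply: contraNneq (m12 1 isT) => <-.
have w2n2 : w2 != 2 by apply: contraNneq (m12 2 isT) => <-.
have le1 : w2 <= 2 * w1.
  by apply: min2; rewrite mul2n -addnn Sa // andbT -modnDm r1.
have le2 : w1 <= 2 * w2.
  by apply: min1; rewrite mul2n -addnn Sa // andbT -modnDm r2.
have s1 : w2 != 2 * w1.
  apply/eqP => e; apply: (small_ed (g := w1) S0 Sa) => //.
  - split; [by [] | lia | move=> a b; rewrite !E => /TP ha /TP hb; lia].
  - split; [by [] | lia | move=> a b; rewrite !E => /TP ha /TP hb; lia].
  - apply/eqP; lia.
  - move=> n; rewrite gen2 E; split.
    + move/TP => [h|[[h h']|[h h']]].
      * by exists (n %/ 3), 0; lia.
      * by exists ((n - w1) %/ 3), 1; lia.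
      * by exists ((n - w2) %/ 3), 2; lia.
    + move=> [x [y ->]]; rewrite -E Sa //; apply: Smul => //.
have s2 : w1 != 2 * w2.
  apply/eqP => e; apply: (small_ed (g := w2) S0 Sa) => //.
  - split; [by [] | lia | move=> a b; rewrite !E => /TP ha /TP hb; lia].
  - split; [by [] | lia | move=> a b; rewrite !E => /TP ha /TP hb; lia].
  - apply/eqP; lia.
  - move=> n; rewrite gen2 E; split.
    + move/TP => [h|[[h h']|[h h']]].
      * by exists (n %/ 3), 0; lia.
      * by exists ((n - w1) %/ 3), 2; lia.
      * by exists ((n - w2) %/ 3), 1; lia.
    + move=> [x [y ->]]; rewrite -E Sa //; apply: Smul => //.
have hmax : maxn w1 w2 = F + 3.
  case: (F %% 3 =P 1) => h1.
    apply: arith1 => //.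
    - rewrite ltnNge; apply: contra nF => hle; rewrite E; apply/TP; right; left; done.
    - by apply: min1; rewrite fF ?andbT ?modnDr ?h1 //; clear; lia.
    - apply: min2; rewrite fF ?andbT ?addn1 ?ltnSn //.
      by rewrite -addn1 -modnDml h1.
  have h2 : F %% 3 = 2.
    by move: (ltn_pmod F (isT : 0 < 3)) F3' h1; case: (F %% 3) => [|[|[|k]]].
  apply: arith2 => //.
  - rewrite ltnNge; apply: contra nF => hle; rewrite E; apply/TP; right; right; done.
  - by apply: min2; rewrite fF ?andbT ?modnDr ?h2 //; clear; lia.
  - apply: min1; rewrite fF ?andbT //; last by clear; lia.
    by rewrite -modnDml h2.
exists w1, w2; split => //.
split; first done; split; first done.
split; first by clear -r1 w1n1; lia.
split; first by clear -r2 w2n2; lia.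
split; first by clear -le1 s1; lia.
split; first by clear -le2 s2; lia.
done.
Qed.

Definition code F (p : nat * nat) : {set 'I_F.+1} := [set i : 'I_F.+1 | T p.1 p.2 i].

Definition Ps F : seq (nat * nat) :=
  if F %% 3 == 1 then
    [seq (F + 3, 3 * j + 2) | j <- iota ((F %/ 3) %/ 2).+1 (F %/ 3 - (F %/ 3) %/ 2)]
  else
    [seq (3 * j + 1, F + 3) | j <- iota ((F %/ 3 + 1) %/ 2).+1 (F %/ 3 + 1 - (F %/ 3 + 1) %/ 2)].

Lemma Ps_spec F p : ~~ (3 %| F) -> (p \in Ps F) <-> valid F p.1 p.2.
Proof.
move=> F3; have F3' : F %% 3 <> 0 by move=> h; move: F3; rewrite /dvdn h.
case: p => a b /=; rewrite /Ps /valid; case: ifP => /eqP hF; split.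
- by case/mapP => j; rewrite mem_iota => hj [-> ->]; lia.
- move=> hv; apply/mapP; exists ((b - 2) %/ 3); first by rewrite mem_iota; lia.
  by apply/eqP; rewrite xpair_eqE; apply/andP; split; apply/eqP; lia.
- by case/mapP => j; rewrite mem_iota => hj [-> ->]; lia.
- move=> hv; apply/mapP; exists ((a - 1) %/ 3); first by rewrite mem_iota; lia.
  by apply/eqP; rewrite xpair_eqE; apply/andP; split; apply/eqP; lia.
Qed.

Lemma Ps_uniq F : uniq (Ps F).
Proof.
rewrite /Ps; case: ifP => _; rewrite map_inj_uniq ?iota_uniq // => i j [] ; lia.
Qed.

Lemma Ps_size F : ~~ (3 %| F) ->
  ((size (Ps F))%:Z = ((F + 1) %/ 3)%:Z - ((F + 7) %/ 6)%:Z + 1)%R.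
Proof.
move=> F3; have F3' : F %% 3 <> 0 by move=> h; move: F3; rewrite /dvdn h.
rewrite /Ps; case: ifP => /eqP hF; rewrite size_map size_iota; lia.
Qed.

Lemma lift_code F w1 w2 : valid F w1 w2 -> lift_set (code F (w1, w2)) =1 T w1 w2.
Proof.
move=> hv n; rewrite /lift_set; case: leqP => h.
  by rewrite inE /= inordK.
by symmetry; apply/TP; move: hv; rewrite /valid; lia.
Qed.

Lemma T_inj w1 w2 v1 v2 : w1 %% 3 = 1 -> w2 %% 3 = 2 -> v1 %% 3 = 1 -> v2 %% 3 = 2 ->
  T w1 w2 =1 T v1 v2 -> (w1, w2) = (v1, v2).
Proof.
move=> a b c d E.
have h1 : T v1 v2 w1 by rewrite -E; apply/TP; lia.
have h2 : T w1 w2 v1 by rewrite E; apply/TP; lia.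
have h3 : T v1 v2 w2 by rewrite -E; apply/TP; lia.
have h4 : T w1 w2 v2 by rewrite E; apply/TP; lia.
move: h1 h2 h3 h4 => /TP h1 /TP h2 /TP h3 /TP h4.
by apply/eqP; rewrite xpair_eqE; apply/andP; split; apply/eqP; lia.
Qed.

Theorem mainTheorem6 (F : nat) (hF : 0 < F) (h3 : ~~ (3 %| F)) :
  exists s : seq {set 'I_F.+1},
    [/\ uniq s,
        (forall S : pred nat,
           (numerical_semigroup S /\ MED_with_multiplicity S 3 /\ is_frobenius S F)
           <-> exists2 A, A \in s & S =1 lift_set A) &
        ((size s)%:Z = ((F + 1) %/ 3)%:Z - ((F + 7) %/ 6)%:Z + 1)%R].
Proof.
exists (map (code F) (Ps F)); split.
- rewrite map_inj_in_uniq ?Ps_uniq //.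
  move=> [a b] [c d] /(Ps_spec _ h3) /= hv /(Ps_spec _ h3) /= hv' e.
  apply: T_inj; try (move: hv hv'; rewrite /valid; lia).
  by move=> n; rewrite -(lift_code hv) -(lift_code hv') e.
- move=> S; split.
  + move=> hp; have [w1 [w2 [hv E]]] := props_char hF h3 hp.
    exists (code F (w1, w2)); first by apply: map_f; apply/(Ps_spec _ h3).
    by move=> n; rewrite E lift_code.
  + case=> A /mapP [[a b] /(Ps_spec _ h3) /= hv ->] E.
    apply: (props_ext (S1 := T a b)); last exact: T_props hv.
    by move=> n; rewrite E lift_code.
- by rewrite size_map Ps_size.
Qed.
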